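(* Let $A,\bar A,B,\bar B,C,\bar C$ be six pairwise distinct points in the real projective plane such that no four of them are collinear, and such that the three pairs $\{A,\bar A\},\{B,\bar B\},\{C,\bar C\}$ are not the pairs of opposite vertices of one and the same complete quadrilateral. Apply Schroeter's construction to these three pairs. Then all points obtained by Schroeter's construction (including $A,\bar A,B,\bar B,C,\bar C$) lie on one and the same cubic curve.
   Context: Notation: for distinct points $P,Q$, $PQ$ is the line through them; for distinct lines $l_1,l_2$, $l_1\wedge l_2$ is their intersection point. Schroeter's construction: one starts with the three pairs of points $\{A,\bar A\},\{B,\bar B\},\{C,\bar C\}$. Whenever $\{P,\bar P\}$ and $\{Q,\bar Q\}$ are two (different) pairs already obtained, one forms the new pair $\{S,\bar S\}$ with $S:=PQ\wedge \bar P\bar Q$ and $\bar S:=P\bar Q\wedge \bar PQ$, and adds it to the collection of pairs; this is iterated. The points obtained are all points belonging to pairs produced in this way. *)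

(* Defs.v *)
From HB Require Import structures.
From mathcomp Require Import all_boot all_order all_algebra.
From mathcomp Require Import reals.
Set Implicit Arguments. Unset Strict Implicit. Unset Printing Implicit Defensive.
Import Order.TTheory GRing.Theory Num.Theory.
Local Open Scope ring_scope.

(* Homogeneous coordinates: a point (or a line) of P^2(R) is represented by a
   nonzero vector of R^3; two nonzero vectors represent the same point iff
   their cross product vanishes. *)
Definition vec (R : realType) := (R * R * R)%type.

Section Proj.
Variable R : realType.

Definition v0 : vec R := (0, 0, 0).
Definition cross (u v : vec R) : vec R :=
  (u.1.2 * v.2 - u.2 * v.1.2, u.2 * v.1.1 - u.1.1 * v.2, u.1.1 * v.1.2 - u.1.2 * v.1.1).
Definition dot (u v : vec R) : R := u.1.1 * v.1.1 + u.1.2 * v.1.2 + u.2 * v.2.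
Definition det3 (u v w : vec R) : R := dot u (cross v w).

Definition same_pt (u v : vec R) : Prop := cross u v = v0.
Definition join (P Q : vec R) : vec R := cross P Q.
Definition meet (l m : vec R) : vec R := cross l m.

Definition collinear4 (P Q S T : vec R) : Prop :=
  [/\ det3 P Q S = 0, det3 P Q T = 0, det3 P S T = 0 & det3 Q S T = 0].

Definition same_pair (X Y U V : vec R) : Prop :=
  (same_pt X U /\ same_pt Y V) \/ (same_pt X V /\ same_pt Y U).

(* The three pairs {A,Ab},{B,Bb},{C,Cb} are the three pairs of opposite
   vertices of the complete quadrilateral formed by four lines l1..l4 in
   general position (no three concurrent). *)
Definition opp_pair (l1 l2 l3 l4 : vec R) (X Y : vec R) : Prop :=
  [\/ same_pair X Y (meet l1 l2) (meet l3 l4),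
      same_pair X Y (meet l1 l3) (meet l2 l4)
    | same_pair X Y (meet l1 l4) (meet l2 l3)].

Definition opposite_vertices_of_complete_quadrilateral
  (A Ab B Bb C Cb : vec R) : Prop :=
  exists l1 l2 l3 l4 : vec R,
    [/\ det3 l1 l2 l3 <> 0, det3 l1 l2 l4 <> 0, det3 l1 l3 l4 <> 0,
        det3 l2 l3 l4 <> 0 &
        [/\ opp_pair l1 l2 l3 l4 A Ab, opp_pair l1 l2 l3 l4 B Bb
          & opp_pair l1 l2 l3 l4 C Cb]].

(* A new pair
   S := PQ ^ PbQb, Sb := PQb ^ PbQ is formed whenever it is well defined,
   i.e. P<>Q, Pb<>Qb, P<>Qb, Pb<>Q and the two lines in each intersection
   are distinct, which in homogeneous coordinates is exactly S <> 0 and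
   Sb <> 0 (this also forces the two pairs to be different). *)
Inductive schroeter_pair (A Ab B Bb C Cb : vec R) : vec R -> vec R -> Prop :=
| sp_A : schroeter_pair A Ab B Bb C Cb A Ab
| sp_B : schroeter_pair A Ab B Bb C Cb B Bb
| sp_C : schroeter_pair A Ab B Bb C Cb C Cb
| sp_step P Pb Q Qb :
    schroeter_pair A Ab B Bb C Cb P Pb ->
    schroeter_pair A Ab B Bb C Cb Q Qb ->
    meet (join P Q) (join Pb Qb) <> v0 ->
    meet (join P Qb) (join Pb Q) <> v0 ->
    schroeter_pair A Ab B Bb C Cb
      (meet (join P Q) (join Pb Qb)) (meet (join P Qb) (join Pb Q)).

Definition schroeter_point (A Ab B Bb C Cb X : vec R) : Prop :=
  exists Y, schroeter_pair A Ab B Bb C Cb X Y \/ schroeter_pair A Ab B Bb C Cb Y X.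

Definition cubic_eval (c : 'I_4 -> 'I_4 -> R) (X : vec R) : R :=
  \sum_(i < 4) \sum_(j < 4 | (i + j <= 3)%N)
     c i j * X.1.1 ^+ i * X.1.2 ^+ j * X.2 ^+ (3 - i - j).

Definition nonzero_cubic (c : 'I_4 -> 'I_4 -> R) : Prop :=
  exists (i j : 'I_4), (i + j <= 3)%N /\ c i j <> 0.

End Proj.
Arguments v0 {R}.

(* Main.v *)
Require Import Defs.
From HB Require Import structures.
From mathcomp Require Import all_boot all_order all_algebra.
From mathcomp Require Import reals ring.
From Stdlib Require Import FunctionalExtensionality.
Import Order.TTheory GRing.Theory Num.Theory.
Local Open Scope ring_scope.

Section Aux.
Variable R : realType.
Local Notation vec := (vec R).

(* ---------- a 6x6 determinant, Laplace-expanded along the first 3 columns *)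
Definition m3 (f g h : nat -> R) (i j k : nat) : R :=
  f i * (g j * h k - g k * h j) - f j * (g i * h k - g k * h i)
  + f k * (g i * h j - g j * h i).

Definition blk (c1 c2 c3 c4 c5 c6 : nat -> R) : R :=
  0 + m3 c1 c2 c3 0 1 2 * m3 c4 c5 c6 3 4 5
  - m3 c1 c2 c3 0 1 3 * m3 c4 c5 c6 2 4 5
  + m3 c1 c2 c3 0 1 4 * m3 c4 c5 c6 2 3 5
  - m3 c1 c2 c3 0 1 5 * m3 c4 c5 c6 2 3 4
  + m3 c1 c2 c3 0 2 3 * m3 c4 c5 c6 1 4 5
  - m3 c1 c2 c3 0 2 4 * m3 c4 c5 c6 1 3 5
  + m3 c1 c2 c3 0 2 5 * m3 c4 c5 c6 1 3 4
  + m3 c1 c2 c3 0 3 4 * m3 c4 c5 c6 1 2 5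
  - m3 c1 c2 c3 0 3 5 * m3 c4 c5 c6 1 2 4
  + m3 c1 c2 c3 0 4 5 * m3 c4 c5 c6 1 2 3
  - m3 c1 c2 c3 1 2 3 * m3 c4 c5 c6 0 4 5
  + m3 c1 c2 c3 1 2 4 * m3 c4 c5 c6 0 3 5
  - m3 c1 c2 c3 1 2 5 * m3 c4 c5 c6 0 3 4
  - m3 c1 c2 c3 1 3 4 * m3 c4 c5 c6 0 2 5
  + m3 c1 c2 c3 1 3 5 * m3 c4 c5 c6 0 2 4
  - m3 c1 c2 c3 1 4 5 * m3 c4 c5 c6 0 2 3
  + m3 c1 c2 c3 2 3 4 * m3 c4 c5 c6 0 1 5
  - m3 c1 c2 c3 2 3 5 * m3 c4 c5 c6 0 1 4
  + m3 c1 c2 c3 2 4 5 * m3 c4 c5 c6 0 1 3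
  - m3 c1 c2 c3 3 4 5 * m3 c4 c5 c6 0 1 2.

Definition comb (v1 v2 v3 v4 v5 v6 : R) (c1 c2 c3 c4 c5 c6 : nat -> R) : nat -> R :=
  fun i => v1 * c1 i + v2 * c2 i + v3 * c3 i + v4 * c4 i + v5 * c5 i + v6 * c6 i.

Lemma blk_lin1 c1 c2 c3 c4 c5 c6 v1 v2 v3 v4 v5 v6 :
  v1 * blk c1 c2 c3 c4 c5 c6 = blk (comb v1 v2 v3 v4 v5 v6 c1 c2 c3 c4 c5 c6) c2 c3 c4 c5 c6.
Proof. rewrite /blk /m3 /comb; ring. Qed.
Lemma blk_lin2 c1 c2 c3 c4 c5 c6 v1 v2 v3 v4 v5 v6 :
  v2 * blk c1 c2 c3 c4 c5 c6 = blk c1 (comb v1 v2 v3 v4 v5 v6 c1 c2 c3 c4 c5 c6) c3 c4 c5 c6.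
Proof. rewrite /blk /m3 /comb; ring. Qed.
Lemma blk_lin3 c1 c2 c3 c4 c5 c6 v1 v2 v3 v4 v5 v6 :
  v3 * blk c1 c2 c3 c4 c5 c6 = blk c1 c2 (comb v1 v2 v3 v4 v5 v6 c1 c2 c3 c4 c5 c6) c4 c5 c6.
Proof. rewrite /blk /m3 /comb; ring. Qed.

Lemma blk_zero1 f c2 c3 c4 c5 c6 : (forall i, f i = 0) -> blk f c2 c3 c4 c5 c6 = 0.
Proof. move=> H; rewrite /blk /m3 !H; ring. Qed.
Lemma blk_zero2 f c1 c3 c4 c5 c6 : (forall i, f i = 0) -> blk c1 f c3 c4 c5 c6 = 0.
Proof. move=> H; rewrite /blk /m3 !H; ring. Qed.
Lemma blk_zero3 f c1 c2 c4 c5 c6 : (forall i, f i = 0) -> blk c1 c2 f c4 c5 c6 = 0.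
Proof. move=> H; rewrite /blk /m3 !H; ring. Qed.

Definition ex : vec := (1, 0, 0).
Definition ey : vec := (0, 1, 0).
Definition ez : vec := (0, 0, 1).

(* symmetric tensor u.v (coordinates of the symmetric bilinear form) *)
Definition sym (u v : vec) : nat -> R := fun i =>
  match i with
  | 0 => u.1.1 * v.1.1
  | 1 => u.1.2 * v.1.2
  | 2 => u.2 * v.2
  | 3 => u.1.1 * v.1.2 + u.1.2 * v.1.1
  | 4 => u.1.1 * v.2 + u.2 * v.1.1
  | _ => u.1.2 * v.2 + u.2 * v.1.2
  end.

Lemma sym_comm u v : sym u v = sym v u.
Proof.
apply: functional_extensionality => i.
by case: i => [|[|[|[|[|i]]]]] /=; ring.
Qed.

Definition Delta (A Ab B Bb C Cb X : vec) : R :=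
  blk (sym X ex) (sym X ey) (sym X ez) (sym A Ab) (sym B Bb) (sym C Cb).

Definition lc (s : R) (X : vec) (t : R) (Y : vec) : vec :=
  (s * X.1.1 + t * Y.1.1, s * X.1.2 + t * Y.1.2, s * X.2 + t * Y.2).

Lemma DeltaN X Xp Y Yp C Cb s t :
  Delta X Xp Y Yp C Cb (lc s X t Y) =
  s * t * (s * det3 X Xp Yp + t * det3 Y Xp Yp) * det3 X Y C * det3 X Y Cb.
Proof.
rewrite /Delta /blk /m3 /lc /det3 /dot /cross /sym /=; ring.
Qed.

Lemma Delta_swap1 A Ab B Bb C Cb X :
  Delta A Ab B Bb C Cb X = Delta Ab A B Bb C Cb X.
Proof. by rewrite /Delta (sym_comm A Ab). Qed.

Lemma Delta_swap2 A Ab B Bb C Cb X :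
  Delta A Ab B Bb C Cb X = Delta A Ab Bb B C Cb X.
Proof. by rewrite /Delta (sym_comm B Bb). Qed.

(* ---------- the invariant: P.Pb lies in the span of A.Ab, B.Bb, C.Cb *)
Definition inW (A Ab B Bb C Cb P Pb : vec) : Prop :=
  exists a b c : R, forall i,
    sym P Pb i = a * sym A Ab i + b * sym B Bb i + c * sym C Cb i.

Lemma hesse P Pb Q Qb i :
  sym (meet (join P Q) (join Pb Qb)) (meet (join P Qb) (join Pb Q)) i =
  - (det3 P Q Qb * det3 Pb Q Qb) * sym P Pb i
  + (det3 Q P Pb * det3 Qb P Pb) * sym Q Qb i.
Proof.
by case: i => [|[|[|[|[|i]]]]]; rewrite /sym /meet /join /cross /det3 /dot /=; ring.
Qed.

Lemma inv_pair A Ab B Bb C Cb P Pb :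
  A <> v0 -> Ab <> v0 -> B <> v0 -> Bb <> v0 -> C <> v0 -> Cb <> v0 ->
  schroeter_pair A Ab B Bb C Cb P Pb ->
  [/\ P <> v0, Pb <> v0 & inW A Ab B Bb C Cb P Pb].
Proof.
move=> hA hAb hB hBb hC hCb; elim=> {P Pb}.
- split=> //; exists 1, 0, 0 => i; ring.
- split=> //; exists 0, 1, 0 => i; ring.
- split=> //; exists 0, 0, 1 => i; ring.
move=> P Pb Q Qb _ [_ _ [a1 [b1 [c1 H1]]]] _ [_ _ [a2 [b2 [c2 H2]]]] nS nSb.
split=> //.
set l := - (det3 P Q Qb * det3 Pb Q Qb).
set m := det3 Q P Pb * det3 Qb P Pb.
exists (l * a1 + m * a2), (l * b1 + m * b2), (l * c1 + m * c2) => i.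
rewrite hesse -/l -/m H1 H2; ring.
Qed.

Arguments inv_pair {A Ab B Bb C Cb P Pb}.

Lemma Delta_vanish A Ab B Bb C Cb X Y :
  Y <> v0 -> inW A Ab B Bb C Cb X Y -> Delta A Ab B Bb C Cb X = 0.
Proof.
move=> nY [a [b [c H]]].
have Z : forall i, comb Y.1.1 Y.1.2 Y.2 (- a) (- b) (- c)
   (sym X ex) (sym X ey) (sym X ez) (sym A Ab) (sym B Bb) (sym C Cb) i = 0.
  move=> i; rewrite /comb.
  have -> : Y.1.1 * sym X ex i + Y.1.2 * sym X ey i + Y.2 * sym X ez i = sym X Y i.
    by case: i => [|[|[|[|[|i]]]]] /=; ring.
  rewrite H; ring.
clear H; move: nY; case: Y Z => [[y1 y2] y3] /= Z nY.
have [h1|h1] := eqVneq y1 0; last first.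
  have := blk_lin1 (sym X ex) (sym X ey) (sym X ez) (sym A Ab) (sym B Bb) (sym C Cb)
    y1 y2 y3 (- a) (- b) (- c).
  rewrite (blk_zero1 _ _ _ _ _ _ Z) => /eqP; rewrite mulf_eq0 (negbTE h1) /=.
  by move/eqP.
have [h2|h2] := eqVneq y2 0; last first.
  have := blk_lin2 (sym X ex) (sym X ey) (sym X ez) (sym A Ab) (sym B Bb) (sym C Cb)
    y1 y2 y3 (- a) (- b) (- c).
  rewrite (blk_zero2 _ _ _ _ _ _ Z) => /eqP; rewrite mulf_eq0 (negbTE h2) /=.
  by move/eqP.
have [h3|h3] := eqVneq y3 0; last first.
  have := blk_lin3 (sym X ex) (sym X ey) (sym X ez) (sym A Ab) (sym B Bb) (sym C Cb)
    y1 y2 y3 (- a) (- b) (- c).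
  rewrite (blk_zero3 _ _ _ _ _ _ Z) => /eqP; rewrite mulf_eq0 (negbTE h3) /=.
  by move/eqP.
by exfalso; apply: nY; rewrite h1 h2 h3.
Qed.

Arguments Delta_vanish {A Ab B Bb C Cb X Y}.

Lemma schroeter_vanish A Ab B Bb C Cb X :
  A <> v0 -> Ab <> v0 -> B <> v0 -> Bb <> v0 -> C <> v0 -> Cb <> v0 ->
  schroeter_point A Ab B Bb C Cb X -> Delta A Ab B Bb C Cb X = 0.
Proof.
move=> hA hAb hB hBb hC hCb [Y [HP|HP]].
  have [_ nY HW] := inv_pair hA hAb hB hBb hC hCb HP.
  exact: Delta_vanish nY HW.
have [nY _ [a [b [c HW]]]] := inv_pair hA hAb hB hBb hC hCb HP.
apply: (Delta_vanish nY); exists a, b, c => i; by rewrite sym_comm HW.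
Qed.

Lemma cubic_evalE (f : nat -> nat -> R) (X : vec) :
  cubic_eval (fun i j : 'I_4 => f i j) X =
  f 0 0 * X.2 ^+ 3 + f 0 1 * X.1.2 * X.2 ^+ 2 + f 0 2 * X.1.2 ^+ 2 * X.2
  + f 0 3 * X.1.2 ^+ 3
  + f 1 0 * X.1.1 * X.2 ^+ 2 + f 1 1 * X.1.1 * X.1.2 * X.2 + f 1 2 * X.1.1 * X.1.2 ^+ 2
  + f 2 0 * X.1.1 ^+ 2 * X.2 + f 2 1 * X.1.1 ^+ 2 * X.1.2
  + f 3 0 * X.1.1 ^+ 3.
Proof.
rewrite /cubic_eval.
under eq_bigr do rewrite big_mkcond.
rewrite /= !big_ord_recr /= !big_ord0 /=.
ring.
Qed.

Lemma cubic_eval0 (c : 'I_4 -> 'I_4 -> R) X :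
  (forall i j : 'I_4, (i + j <= 3)%N -> c i j = 0) -> cubic_eval c X = 0.
Proof.
move=> H; rewrite /cubic_eval big1 // => i _; rewrite big1 // => j hj.
by rewrite H // !mul0r.
Qed.

(* coefficients of (u.X)(v.X)(w.X) *)
Definition lincube (u v w : vec) (i j : nat) : R :=
  let u1 := u.1.1 in let u2 := u.1.2 in let u3 := u.2 in
  let v1 := v.1.1 in let v2 := v.1.2 in let v3 := v.2 in
  let w1 := w.1.1 in let w2 := w.1.2 in let w3 := w.2 in
  match i, j with
  | 3, 0 => u1 * v1 * w1
  | 0, 3 => u2 * v2 * w2
  | 0, 0 => u3 * v3 * w3
  | 2, 1 => u1 * v1 * w2 + u1 * v2 * w1 + u2 * v1 * w1
  | 2, 0 => u1 * v1 * w3 + u1 * v3 * w1 + u3 * v1 * w1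
  | 1, 2 => u1 * v2 * w2 + u2 * v1 * w2 + u2 * v2 * w1
  | 0, 2 => u2 * v2 * w3 + u2 * v3 * w2 + u3 * v2 * w2
  | 1, 0 => u1 * v3 * w3 + u3 * v1 * w3 + u3 * v3 * w1
  | 0, 1 => u2 * v3 * w3 + u3 * v2 * w3 + u3 * v3 * w2
  | 1, 1 => u1 * v2 * w3 + u1 * v3 * w2 + u2 * v1 * w3 + u2 * v3 * w1
            + u3 * v1 * w2 + u3 * v2 * w1
  | _, _ => 0
  end.

Definition fcoef (A Ab B Bb C Cb : vec) (i j : nat) : R :=
  - lincube (cross A Ab) (cross B Bb) (cross C Cb) i j
  + lincube (cross A Ab) (cross B C) (cross Bb Cb) i j
  + lincube (cross A B) (cross Ab Bb) (cross C Cb) i j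
  - lincube (cross A B) (cross Ab C) (cross Bb Cb) i j
  - lincube (cross A Bb) (cross Ab C) (cross B Cb) i j.

Definition ccoef (A Ab B Bb C Cb : vec) : 'I_4 -> 'I_4 -> R :=
  fun i j => fcoef A Ab B Bb C Cb i j.

Lemma ccoefE A Ab B Bb C Cb X :
  cubic_eval (ccoef A Ab B Bb C Cb) X = Delta A Ab B Bb C Cb X.
Proof.
rewrite /ccoef cubic_evalE /fcoef /lincube /Delta /blk /m3 /sym /cross /=.
ring.
Qed.

End Aux.

Arguments DeltaN {R}.
Arguments Delta {R}.
Arguments Delta_swap1 {R}.
Arguments Delta_swap2 {R}.
Arguments ccoef {R}.
Arguments ccoefE {R}.
Arguments schroeter_vanish {R}.
Arguments cubic_eval0 {R}.
Section Geo.
Variable R : realType.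
Local Notation vec := (vec R).

Lemma det3_cyc (u v w : vec) : det3 u v w = det3 v w u.
Proof. rewrite /det3 /dot /cross /=; ring. Qed.
Lemma det3_swap (u v w : vec) : det3 u v w = - det3 v u w.
Proof. rewrite /det3 /dot /cross /=; ring. Qed.

Lemma scal_nz (d : R) (u : vec) : u <> v0 ->
  d * u.1.1 = 0 -> d * u.1.2 = 0 -> d * u.2 = 0 -> d = 0.
Proof.
case: u => [[u1 u2] u3] /= nz h1 h2 h3.
have [//|dn] := eqVneq d 0.
move/eqP: h1; rewrite mulf_eq0 (negbTE dn) /= => /eqP h1.
move/eqP: h2; rewrite mulf_eq0 (negbTE dn) /= => /eqP h2.
move/eqP: h3; rewrite mulf_eq0 (negbTE dn) /= => /eqP h3.
by exfalso; apply: nz; rewrite h1 h2 h3.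
Qed.

Arguments scal_nz {d u}.

Lemma col4 (P Q X Y : vec) : cross P Q <> v0 ->
  det3 P Q X = 0 -> det3 P Q Y = 0 -> collinear4 P Q X Y.
Proof.
move=> nz hX hY; split => //.
- apply: (scal_nz nz).
  + have -> : det3 P X Y * (cross P Q).1.1 =
       - det3 P Q Y * (cross X P).1.1 + det3 P Q X * (cross Y P).1.1
      by rewrite /det3 /dot /cross /=; ring.
    by rewrite hX hY; ring.
  + have -> : det3 P X Y * (cross P Q).1.2 =
       - det3 P Q Y * (cross X P).1.2 + det3 P Q X * (cross Y P).1.2
      by rewrite /det3 /dot /cross /=; ring.
    by rewrite hX hY; ring.
  + have -> : det3 P X Y * (cross P Q).2 =
       - det3 P Q Y * (cross X P).2 + det3 P Q X * (cross Y P).2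
      by rewrite /det3 /dot /cross /=; ring.
    by rewrite hX hY; ring.
- apply: (scal_nz nz).
  + have -> : det3 Q X Y * (cross P Q).1.1 =
       det3 P Q X * (cross Y Q).1.1 - det3 P Q Y * (cross X Q).1.1
      by rewrite /det3 /dot /cross /=; ring.
    by rewrite hX hY; ring.
  + have -> : det3 Q X Y * (cross P Q).1.2 =
       det3 P Q X * (cross Y Q).1.2 - det3 P Q Y * (cross X Q).1.2
      by rewrite /det3 /dot /cross /=; ring.
    by rewrite hX hY; ring.
  + have -> : det3 Q X Y * (cross P Q).2 =
       det3 P Q X * (cross Y Q).2 - det3 P Q Y * (cross X Q).2
      by rewrite /det3 /dot /cross /=; ring.
    by rewrite hX hY; ring.
Qed.

Lemma cross_cross (P l m : vec) : cross P (cross l m) =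
  (l.1.1 * dot P m - m.1.1 * dot P l, l.1.2 * dot P m - m.1.2 * dot P l,
   l.2 * dot P m - m.2 * dot P l).
Proof. rewrite /cross /dot /=; congr (_, _, _); ring. Qed.

Lemma same_meet (P l m : vec) : dot P l = 0 -> dot P m = 0 -> same_pt P (meet l m).
Proof.
move=> h1 h2; rewrite /same_pt /meet cross_cross h1 h2 /v0.
by congr (_, _, _); ring.
Qed.

Lemma dot_cross_l (A B : vec) : dot A (cross A B) = 0.
Proof. rewrite /dot /cross /=; ring. Qed.
Lemma dot_cross_r (A B : vec) : dot B (cross A B) = 0.
Proof. rewrite /dot /cross /=; ring. Qed.

Lemma quad_of (A Ab B Bb C Cb : vec) :
  det3 A B C = 0 -> det3 A Bb Cb = 0 -> det3 Ab B Cb = 0 -> det3 Ab Bb C = 0 ->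
  det3 A B Bb <> 0 -> det3 A B Ab <> 0 -> det3 A Bb Ab <> 0 -> det3 Ab B Bb <> 0 ->
  opposite_vertices_of_complete_quadrilateral A Ab B Bb C Cb.
Proof.
move=> I1 I2 I3 I4 n1 n2 n3 n4.
exists (cross A B), (cross A Bb), (cross Ab B), (cross Ab Bb); split.
- have -> : det3 (cross A B) (cross A Bb) (cross Ab B) = - (det3 A B Bb * det3 A B Ab)
    by rewrite /det3 /dot /cross /=; ring.
  by apply/eqP; rewrite ?oppr_eq0 mulf_neq0 //; apply/eqP.
- have -> : det3 (cross A B) (cross A Bb) (cross Ab Bb) = - (det3 A Bb Ab * det3 A B Bb)
    by rewrite /det3 /dot /cross /=; ring.
  by apply/eqP; rewrite ?oppr_eq0 mulf_neq0 //; apply/eqP.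
- have -> : det3 (cross A B) (cross Ab B) (cross Ab Bb) = det3 Ab B Bb * det3 A B Ab
    by rewrite /det3 /dot /cross /=; ring.
  by apply/eqP; rewrite ?oppr_eq0 mulf_neq0 //; apply/eqP.
- have -> : det3 (cross A Bb) (cross Ab B) (cross Ab Bb) = det3 Ab B Bb * det3 A Bb Ab
    by rewrite /det3 /dot /cross /=; ring.
  by apply/eqP; rewrite ?oppr_eq0 mulf_neq0 //; apply/eqP.
split.
- apply: Or31; left; split; apply: same_meet;
    by rewrite ?dot_cross_l ?dot_cross_r.
- apply: Or32; left; split; apply: same_meet;
    by rewrite ?dot_cross_l ?dot_cross_r.
- have J1 : dot C (cross A B) = 0 by rewrite -/(det3 C A B) det3_cyc.
  have J2 : dot C (cross Ab Bb) = 0 by rewrite -/(det3 C Ab Bb) det3_cyc.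
  have J3 : dot Cb (cross A Bb) = 0 by rewrite -/(det3 Cb A Bb) det3_cyc.
  have J4 : dot Cb (cross Ab B) = 0 by rewrite -/(det3 Cb Ab B) det3_cyc.
  by apply: Or33; left; split; apply: same_meet.
Qed.

Lemma det3_132 (u v w : vec) : det3 u v w = - det3 u w v.
Proof. rewrite /det3 /dot /cross /=; ring. Qed.

Lemma FK (X Xp Y Yp C Cb : vec) :
  (forall Z, Delta X Xp Y Yp C Cb Z = 0) -> cross Xp Yp <> v0 ->
  ~ collinear4 Xp Yp X Y -> det3 X Y C * det3 X Y Cb = 0.
Proof.
move=> D0 nz nc.
have h1 := DeltaN X Xp Y Yp C Cb 1 1; rewrite D0 in h1.
have h2 := DeltaN X Xp Y Yp C Cb 1 (-1); rewrite D0 in h2.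
set a := det3 X Xp Yp in h1 h2; set b := det3 Y Xp Yp in h1 h2.
set d1 := det3 X Y C in h1 h2 *; set d2 := det3 X Y Cb in h1 h2 *.
have e1 : (a + b) * (d1 * d2) = 1 * 1 * (1 * a + 1 * b) * d1 * d2 by ring.
rewrite -h1 in e1.
have e2 : (a - b) * (d1 * d2) = - (1 * (-1) * (1 * a + (-1) * b) * d1 * d2) by ring.
rewrite -h2 oppr0 in e2.
have [//|dn] := eqVneq (d1 * d2) 0.
exfalso; apply: nc.
move/eqP: e1; rewrite mulf_eq0 (negbTE dn) orbF => /eqP e1.
move/eqP: e2; rewrite mulf_eq0 (negbTE dn) orbF => /eqP e2.
have a0 : a = 0.
  have : 2 * a = 0 by rewrite -[RHS](addr0 0) -{1}e1 -e2; ring.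
  by move/eqP; rewrite mulf_eq0 pnatr_eq0 /= => /eqP.
have b0 : b = 0 by move: e1; rewrite a0 add0r.
apply: col4 => //.
- by rewrite -det3_cyc.
- by rewrite -det3_cyc.
Qed.

Lemma combi (A Ab B Bb C Cb : vec) :
  det3 A B C = 0 ->
  det3 A Bb C * det3 A Bb Cb = 0 -> det3 Ab B C * det3 Ab B Cb = 0 ->
  det3 Ab Bb C * det3 Ab Bb Cb = 0 ->
  cross A C <> v0 -> cross B C <> v0 -> cross Bb Cb <> v0 -> cross A B <> v0 ->
  cross A Bb <> v0 -> cross Ab B <> v0 ->
  ~ collinear4 A C B Bb -> ~ collinear4 B C A Ab -> ~ collinear4 Bb Cb A Ab ->
  ~ collinear4 A B Bb C -> ~ collinear4 A B Ab C -> ~ collinear4 A Bb Ab Cb ->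
  ~ collinear4 Ab B Bb Cb ->
  opposite_vertices_of_complete_quadrilateral A Ab B Bb C Cb.
Proof.
move=> I1 F2 F3 F4 cAC cBC cBbCb cAB cABb cAbB n1 n2 n3 n4 n5 n6 n7.
have I2 : det3 A Bb Cb = 0.
  move/eqP: F2; rewrite mulf_eq0 => /orP [/eqP h|/eqP //].
  exfalso; apply: n1; apply: col4 => //.
  - by rewrite det3_132 I1 oppr0.
  - by rewrite det3_132 h oppr0.
have I3 : det3 Ab B Cb = 0.
  move/eqP: F3; rewrite mulf_eq0 => /orP [/eqP h|/eqP //].
  exfalso; apply: n2; apply: col4 => //.
  - by rewrite -det3_cyc.
  - by rewrite -det3_cyc.
have I4 : det3 Ab Bb C = 0.
  move/eqP: F4; rewrite mulf_eq0 => /orP [/eqP //|/eqP h].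
  exfalso; apply: n3; apply: col4 => //.
  - by rewrite -det3_cyc.
  - by rewrite -det3_cyc.
apply: quad_of => // h.
- by apply: n4; apply: col4.
- by apply: n5; apply: col4.
- by apply: n6; apply: col4.
- by apply: n7; apply: col4.
Qed.

Lemma quad_swapC (A Ab B Bb C Cb : vec) :
  opposite_vertices_of_complete_quadrilateral A Ab B Bb Cb C ->
  opposite_vertices_of_complete_quadrilateral A Ab B Bb C Cb.
Proof.
case=> l1 [l2 [l3 [l4 [d1 d2 d3 d4 [o1 o2 o3]]]]].
exists l1, l2, l3, l4; split => //; split => //.
have sw : forall X Y U V : vec, same_pair Cb C U V -> same_pair C Cb U V.
  by move=> ? ? U V [[h1 h2]|[h1 h2]]; [right|left].
by case: o3 => h; [apply: Or31|apply: Or32|apply: Or33]; apply: sw.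
Qed.

Lemma theorem5_sec (A Ab B Bb C Cb : vec) :
  (forall X, X \in [:: A; Ab; B; Bb; C; Cb] -> X <> v0) ->
  (forall i j : 'I_6, i <> j ->
     ~ same_pt (nth v0 [:: A; Ab; B; Bb; C; Cb] i)
               (nth v0 [:: A; Ab; B; Bb; C; Cb] j)) ->
  (forall i j k l : 'I_6, uniq [:: i; j; k; l] ->
     ~ collinear4 (nth v0 [:: A; Ab; B; Bb; C; Cb] i)
                  (nth v0 [:: A; Ab; B; Bb; C; Cb] j)
                  (nth v0 [:: A; Ab; B; Bb; C; Cb] k)
                  (nth v0 [:: A; Ab; B; Bb; C; Cb] l)) ->
  ~ opposite_vertices_of_complete_quadrilateral A Ab B Bb C Cb ->
  exists c : 'I_4 -> 'I_4 -> R,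
    nonzero_cubic c /\
    forall X, schroeter_point A Ab B Bb C Cb X -> cubic_eval c X = 0.
Proof.
move=> H1 H2 H3 H4.
have hA : A <> v0 by apply: H1; rewrite !inE eqxx.
have hAb : Ab <> v0 by apply: H1; rewrite !inE eqxx ?orbT.
have hB : B <> v0 by apply: H1; rewrite !inE eqxx ?orbT.
have hBb : Bb <> v0 by apply: H1; rewrite !inE eqxx ?orbT.
have hC : C <> v0 by apply: H1; rewrite !inE eqxx ?orbT.
have hCb : Cb <> v0 by apply: H1; rewrite !inE eqxx ?orbT.
have NZ : forall (i j : nat) (hi : (i < 6)%N) (hj : (j < 6)%N), i != j ->
    cross (nth v0 [:: A; Ab; B; Bb; C; Cb] i) (nth v0 [:: A; Ab; B; Bb; C; Cb] j) <> v0.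
  move=> i j hi hj ij; apply: (H2 (Ordinal hi) (Ordinal hj)).
  by move/(congr1 val) => /= /eqP; rewrite (negbTE ij).
have NC : forall (i j k l : nat) (hi : (i < 6)%N) (hj : (j < 6)%N)
    (hk : (k < 6)%N) (hl : (l < 6)%N), uniq [:: i; j; k; l] ->
    ~ collinear4 (nth v0 [:: A; Ab; B; Bb; C; Cb] i)
                 (nth v0 [:: A; Ab; B; Bb; C; Cb] j)
                 (nth v0 [:: A; Ab; B; Bb; C; Cb] k)
                 (nth v0 [:: A; Ab; B; Bb; C; Cb] l).
  move=> i j k l hi hj hk hl u.
  apply: (H3 (Ordinal hi) (Ordinal hj) (Ordinal hk) (Ordinal hl)).
  by rewrite -(map_inj_uniq val_inj).
exists (ccoef A Ab B Bb C Cb); split; last first.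
  by move=> X HX; rewrite ccoefE; exact: schroeter_vanish.
case: (boolP [exists i : 'I_4, [exists j : 'I_4,
          ((i + j <= 3)%N && (ccoef A Ab B Bb C Cb i j != 0))]]).
  move/existsP => [i /existsP [j /andP [hij hc]]].
  by exists i, j; split => //; apply/eqP.
move=> hn; exfalso.
have Hall : forall i j : 'I_4, (i + j <= 3)%N -> ccoef A Ab B Bb C Cb i j = 0.
  move=> i j hij; apply/eqP; apply: contraNT hn => hc.
  by apply/existsP; exists i; apply/existsP; exists j; rewrite hij hc.
have D0 : forall Z, Delta A Ab B Bb C Cb Z = 0.
  by move=> Z; rewrite -ccoefE; exact: cubic_eval0.
have F1 : det3 A B C * det3 A B Cb = 0.
  apply: (FK A Ab B Bb C Cb) => //.
  - exact: (NZ 1 3 isT isT isT).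
  - exact: (NC 1 3 0 2 isT isT isT isT isT).
have F2 : det3 A Bb C * det3 A Bb Cb = 0.
  apply: (FK A Ab Bb B C Cb).
  - by move=> Z; rewrite -Delta_swap2.
  - exact: (NZ 1 2 isT isT isT).
  - exact: (NC 1 2 0 3 isT isT isT isT isT).
have F3 : det3 Ab B C * det3 Ab B Cb = 0.
  apply: (FK Ab A B Bb C Cb).
  - by move=> Z; rewrite -Delta_swap1.
  - exact: (NZ 0 3 isT isT isT).
  - exact: (NC 0 3 1 2 isT isT isT isT isT).
have F4 : det3 Ab Bb C * det3 Ab Bb Cb = 0.
  apply: (FK Ab A Bb B C Cb).
  - by move=> Z; rewrite -Delta_swap2 -Delta_swap1.
  - exact: (NZ 0 2 isT isT isT).
  - exact: (NC 0 2 1 3 isT isT isT isT isT).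
apply: H4.
move/eqP: F1; rewrite mulf_eq0 => /orP [/eqP I1|/eqP I1].
  apply: combi => //.
  - exact: (NZ 0 4 isT isT isT).
  - exact: (NZ 2 4 isT isT isT).
  - exact: (NZ 3 5 isT isT isT).
  - exact: (NZ 0 2 isT isT isT).
  - exact: (NZ 0 3 isT isT isT).
  - exact: (NZ 1 2 isT isT isT).
  - exact: (NC 0 4 2 3 isT isT isT isT isT).
  - exact: (NC 2 4 0 1 isT isT isT isT isT).
  - exact: (NC 3 5 0 1 isT isT isT isT isT).
  - exact: (NC 0 2 3 4 isT isT isT isT isT).
  - exact: (NC 0 2 1 4 isT isT isT isT isT).
  - exact: (NC 0 3 1 5 isT isT isT isT isT).
  - exact: (NC 1 2 3 5 isT isT isT isT isT).
apply: quad_swapC; apply: combi => //.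
- by rewrite mulrC.
- by rewrite mulrC.
- by rewrite mulrC.
- exact: (NZ 0 5 isT isT isT).
- exact: (NZ 2 5 isT isT isT).
- exact: (NZ 3 4 isT isT isT).
- exact: (NZ 0 2 isT isT isT).
- exact: (NZ 0 3 isT isT isT).
- exact: (NZ 1 2 isT isT isT).
- exact: (NC 0 5 2 3 isT isT isT isT isT).
- exact: (NC 2 5 0 1 isT isT isT isT isT).
- exact: (NC 3 4 0 1 isT isT isT isT isT).
- exact: (NC 0 2 3 5 isT isT isT isT isT).
- exact: (NC 0 2 1 5 isT isT isT isT isT).
- exact: (NC 0 3 1 4 isT isT isT isT isT).
- exact: (NC 1 2 3 4 isT isT isT isT isT).
Qed.

End Geo.

Theorem theorem5 (R : realType) (A Ab B Bb C Cb : vec R) :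
  (forall X, X \in [:: A; Ab; B; Bb; C; Cb] -> X <> v0) ->
  (forall i j : 'I_6, i <> j ->
     ~ same_pt (nth v0 [:: A; Ab; B; Bb; C; Cb] i)
               (nth v0 [:: A; Ab; B; Bb; C; Cb] j)) ->
  (forall i j k l : 'I_6, uniq [:: i; j; k; l] ->
     ~ collinear4 (nth v0 [:: A; Ab; B; Bb; C; Cb] i)
                  (nth v0 [:: A; Ab; B; Bb; C; Cb] j)
                  (nth v0 [:: A; Ab; B; Bb; C; Cb] k)
                  (nth v0 [:: A; Ab; B; Bb; C; Cb] l)) ->
  ~ opposite_vertices_of_complete_quadrilateral A Ab B Bb C Cb ->
  exists c : 'I_4 -> 'I_4 -> R,
    nonzero_cubic c /\
    forall X, schroeter_point A Ab B Bb C Cb X -> cubic_eval c X = 0.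
Proof. exact: theorem5_sec. Qed.
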